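(* Let $G$ be a finite two-player zero-sum simultaneous-move game with perfect information on which SM-MCTS is run, let $h$ be a decision node of $G$, and let $\epsilon,c\ge0$. Let $A$ be an $\epsilon$-Hannan consistent algorithm which generates the sequence of actions $(i(t))$ of player 1 at $h$, and let $(j(t))$ be the actions chosen by the adversary (player 2) at $h$. Let $v_{ij}$ be the value of the subgame rooted at the child $h_{ij}$. If almost surely $\limsup_{n\to\infty}|\bar s_{ij}(n)-v_{ij}|\le c\epsilon$ for each $i,j$, and $A$ is $\epsilon$-UPO, then almost surely \[\limsup_{t\to\infty}\frac1t\left(\max_{i_0}\sum_{s=1}^t v_{i_0j(s)}-\sum_{s=1}^t v_{i(s)j(s)}\right)\le 2(c+1)\epsilon.\] Consequently the choice of actions $(i(t))$ made by $A$ is $2(c+1)\epsilon$-Hannan consistent with respect to the matrix game $(v_{ij})$.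
   Context: Game: finite rooted tree; decision nodes $h$ have finite action sets $\mathcal A_1(h),\mathcal A_2(h)$, joint action $(i,j)$ leading to child $h_{ij}$; terminal utilities $u_1\in[0,1]$, $u_2=-u_1$; the value of a subgame is its minimax value. SM-MCTS: each node of the search tree holds one bandit-algorithm instance per player; at each visit of $h$ the instances choose $(i,j)$, the search recursively returns a value $x$ from $h_{ij}$, player 1's instance at $h$ is updated with reward $x$ (player 2's with $1-x$), and $x$ is passed upward. Index visits of $h$ by $t=1,2,\dots$; $i(t),j(t)$ are the actions chosen; $t_{ij}$ is the number of visits $\le t$ with joint action $(i,j)$. $s_{ij}(n)$ is the value returned from $h_{ij}$ the $n$-th time $(i,j)$ is chosen at $h$; $\bar s_{ij}(n)=\frac1n\sum_{m\le n}s_{ij}(m)$. The bandit reward of action $i$ for player 1 at visit $t$ is $x_i(t)=s_{ij(t)}((t-1)_{ij(t)}+1)$, i.e. the value that would be observed the next time $(i,j(t))$ is chosen. Bandit regret $r(t)=\frac1t(\max_k\sum_{s\le t}x_k(s)-\sum_{s\le t}x_{i(s)}(s))$; $\epsilon$-Hannan consistent: $\limsup_t r(t)\le\epsilon$ a.s. against every adversary. UPO: let $t^*_{ij}(k)=\min\{t:t_{ij}=k\}$ (with $t^*_{ij}(0)=0$), $w_{ij}(n)=1+|\{t:t^*_{ij}(n-1)\le t\le t^*_{ij}(n),\ j(t)=j,\ i(t)\ne i\}|$, $\tilde s_{ij}(n)=\frac{\sum_{m\le n}w_{ij}(m)s_{ij}(m)}{\sum_{m\le n}w_{ij}(m)}$.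 $A$ is $\epsilon$-UPO if for every such game, every node $h$ and all $i,j$, almost surely $\limsup_{n\to\infty}|\tilde s_{ij}(n)-\bar s_{ij}(n)|\le\epsilon$. *)

(* Defs.v *)
From HB Require Import structures.
From mathcomp Require Import all_boot all_order all_algebra.
From mathcomp Require Import all_classical all_reals.
From mathcomp Require Import topology normedtype sequences measure probability.

Set Implicit Arguments.
Unset Strict Implicit.
Unset Printing Implicit Defensive.

Import Order.TTheory GRing.Theory Num.Theory.
Import numFieldNormedType.Exports.
Local Open Scope ring_scope.

(* Quantities at a fixed decision node h along one run of SM-MCTS.
   Visits of h are indexed by t = 1, 2, ...  (index 0 is unused).
   ia t / ja t : joint action chosen at the t-th visit;
   s i j n     : value returned from child h_ij the n-th time (i,j) is
                 chosen at h (n = 1, 2, ...; index 0 unused). *)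

Section NodeRun.
Variables (R : realType) (I J : finType).
Variables (ia : nat -> I) (ja : nat -> J).

Definition visit_count (i : I) (j : J) (t : nat) : nat :=
  \sum_(1 <= u < t.+1) ((ia u == i) && (ja u == j) : nat).

Variable s : I -> J -> nat -> R.

Definition sbar (i : I) (j : J) (n : nat) : R :=
  n%:R^-1 * \sum_(1 <= m < n.+1) s i j m.

Definition bandit_reward (k : I) (t : nat) : R :=
  s k (ja t) (visit_count k (ja t) t.-1).+1.

Definition fmax (F : I -> R) : R := sup (range F).

Definition bandit_regret (t : nat) : R :=
  t%:R^-1 * (fmax (fun k => \sum_(1 <= u < t.+1) bandit_reward k u)
             - \sum_(1 <= u < t.+1) bandit_reward (ia u) u).

(* w_ij(n) counted only over visits t <= T:
   1 + |{ t <= T : t*_ij(n-1) <= t <= t*_ij(n), j(t) = j, i(t) <> i }|.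
   For t >= 1 with i(t) <> i, the condition t*_ij(n-1) <= t <= t*_ij(n)
   is equivalent to t_ij = n-1. *)
Definition weight_upto (i : I) (j : J) (T n : nat) : nat :=
  1 + \sum_(1 <= t < T.+1)
        [&& ja t == j, ia t != i & visit_count i j t == n.-1].

Definition stilde_upto (i : I) (j : J) (T n : nat) : R :=
  (\sum_(1 <= m < n.+1) (weight_upto i j T m)%:R * s i j m) /
  (\sum_(1 <= m < n.+1) (weight_upto i j T m)%:R).

(* \tilde s_ij(n): the weights w_ij(m) are the limits (T -> oo) of
   weight_upto; a weight may be infinite (when t*_ij(m) = oo), and the
   weighted average is then understood as the limit of the truncated ones. *)
Definition stilde (i : I) (j : J) (n : nat) : R :=
  limn (fun T => stilde_upto i j T n).

Definition matrix_regret (v : I -> J -> R) (t : nat) : R :=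
  t%:R^-1 * (fmax (fun i0 => \sum_(1 <= u < t.+1) v i0 (ja u))
             - \sum_(1 <= u < t.+1) v (ia u) (ja u)).

End NodeRun.

Definition limsup_le (R : realType) (u : nat -> R) (a : R) : Prop :=
  (limn_esup (fun n => (u n)%:E) <= a%:E)%E.

(* Main.v *)
Require Import Defs.
From HB Require Import structures.
From mathcomp Require Import all_boot all_order all_algebra.
From mathcomp Require Import all_classical all_reals ereal.
From mathcomp Require Import topology normedtype sequences measure probability.
From mathcomp Require Import zify ring lra.
Import Order.TTheory GRing.Theory Num.Theory.
Import numFieldNormedType.Exports.
Local Open Scope ring_scope.
Lemma lsup_elim {R : realType} {u : nat -> R} {a : R} :
  limsup_le u a -> forall e, 0 < e -> exists N, forall n, (N <= n)%N -> u n <= a + e.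
Proof.
rewrite /limsup_le /limn_esup /limf_esup => H e e0.
have : (ereal_inf [set ereal_sup [set (u x)%:E | x in V] | V in (\oo : set_system nat)] < (a+e)%:E)%E.
  by apply: le_lt_trans H _; rewrite lte_fin ltrDl.
case/ereal_inf_lt => _ [V [N _ HV] <-] Hlt.
exists N => n Nn.
have : ((u n)%:E <= ereal_sup [set (u x)%:E | x in V])%E.
  by apply: ereal_sup_ubound; exists n => //; apply: HV.
move=> H2; rewrite -lee_fin; apply: le_trans H2 _; exact: ltW.
Qed.

Lemma lsup_intro {R : realType} {u : nat -> R} {a : R} :
  (forall e, 0 < e -> exists N, forall n, (N <= n)%N -> u n <= a + e) -> limsup_le u a.
Proof.
move=> H; rewrite /limsup_le /limn_esup /limf_esup.
apply/lee_addgt0Pr => e e0.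
have [N HN] := H e e0.
apply: (@le_trans _ _ (ereal_sup [set (u x)%:E | x in (fun n : nat => (N <= n)%N : Prop)])).
  apply: ereal_inf_lbound; exists (fun n : nat => (N <= n)%N : Prop) => //; exists N => // n.
apply: ub_ereal_sup => _ [n Hn <-]; rewrite -EFinD lee_fin; exact: HN.
Qed.

Section Det.
Variables (R : realType) (I J : finType) (ia : nat -> I) (ja : nat -> J).

Local Notation cnt := (visit_count ia ja).

Lemma cnt0 i j : cnt i j 0 = 0%N.
Proof. by rewrite /visit_count big_geq. Qed.

Lemma cntS i j t : cnt i j t.+1 = (cnt i j t + ((ia t.+1 == i) && (ja t.+1 == j)))%N.
Proof. by rewrite /visit_count big_nat_recr. Qed.

Lemma cnt_mono i j t t' : (t <= t')%N -> (cnt i j t <= cnt i j t')%N.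
Proof.
move=> /subnKC <-; elim: (t' - t)%N => [|k IH]; first by rewrite addn0.
by rewrite addnS cntS; apply: leq_trans IH _; apply: leq_addr.
Qed.

Lemma cnt_le i j t : (cnt i j t <= t)%N.
Proof. elim: t => [|t IH]; first by rewrite cnt0. rewrite cntS; case: (_ && _) => /=; lia. Qed.

Definition G i j t n : nat := \sum_(1 <= u < t.+1)
        [&& ja u == j, ia u != i & cnt i j u == n.-1].

Lemma weightE i j t n : weight_upto ia ja i j t n = (1 + G i j t n)%N.
Proof. by []. Qed.

Lemma GS i j t n : G i j t.+1 n = (G i j t n + [&& ja t.+1 == j, ia t.+1 != i & cnt i j t.+1 == n.-1])%N.
Proof. by rewrite /G big_nat_recr. Qed.

Lemma G_mono i j t t' n : (t <= t')%N -> (G i j t n <= G i j t' n)%N.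
Proof.
move=> /subnKC <-; elim: (t' - t)%N => [|k IH]; first by rewrite addn0.
by rewrite addnS GS; apply: leq_trans IH _; apply: leq_addr.
Qed.

Lemma G_fix i j t t' n : (1 <= n)%N -> (n <= cnt i j t)%N -> (t <= t')%N -> G i j t' n = G i j t n.
Proof.
move=> n1 nc /subnKC <-; elim: (t' - t)%N => [|k IH]; first by rewrite addn0.
rewrite addnS GS IH.
have : (cnt i j t <= cnt i j (t + k).+1)%N by apply: cnt_mono; lia.
case: (cnt i j (t + k).+1 == n.-1) /eqP => [->|]; last by rewrite !andbF addn0.
lia.
Qed.

Lemma G_zero i j t n : (cnt i j t + 2 <= n)%N -> G i j t n = 0%N.
Proof.
move=> H; rewrite /G big1_seq // => u; rewrite mem_index_iota => /andP [_ ut].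
have : (cnt i j u <= cnt i j t)%N by apply: cnt_mono; lia.
case: (cnt i j u == n.-1) /eqP => [->|]; last by rewrite !andbF.
lia.
Qed.


Lemma ind_sum (f : nat -> R) m K :
  \sum_(1 <= n < K.+2) ((m == n.-1)%:R * f n) = (m <= K)%:R * f m.+1.
Proof.
elim: K => [|K IH].
  rewrite big_nat1 /=; case: m => [|m] /=; first by rewrite !mul1r.
  by rewrite !mul0r.
rewrite big_nat_recr //= IH.
case: (m =P K.+1) => [->|ne].
  by rewrite leqnn ltnn mul0r add0r mul1r.
have E : (m <= K.+1)%N = (m <= K)%N by apply/idP/idP; lia.
by rewrite E mul0r addr0.
Qed.

Lemma reindex_b i j (g : nat -> R) t :
  \sum_(1 <= u < t.+1) (((ia u == i) && (ja u == j))%:R * g (cnt i j u))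
  = \sum_(1 <= n < (cnt i j t).+1) g n.
Proof.
elim: t => [|t IH]; first by rewrite cnt0 !big_geq.
rewrite big_nat_recr //= IH cntS.
case: ((ia t.+1 == i) && (ja t.+1 == j)) => /=.
  by rewrite addn1 mul1r [in RHS]big_nat_recr.
by rewrite mul0r addr0 addn0.
Qed.

Lemma reindex_o i j (f : nat -> R) t :
  \sum_(1 <= u < t.+1) (((ja u == j) && (ia u != i))%:R * f (cnt i j u).+1)
  = \sum_(1 <= n < (cnt i j t).+2) ((G i j t n)%:R * f n).
Proof.
transitivity (\sum_(1 <= u < t.+1) \sum_(1 <= n < (cnt i j t).+2)
   (((ja u == j) && (ia u != i))%:R * (((cnt i j u) == n.-1)%:R * f n))).
  apply: eq_big_nat => u /andP [_ ut].
  rewrite -mulr_sumr ind_sum.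
  have -> : (cnt i j u <= cnt i j t)%N by apply: cnt_mono; lia.
  by rewrite mul1r.
rewrite exchange_big /=; apply: eq_bigr => n _.
rewrite /G natr_sum mulr_suml; apply: eq_bigr => u _.
rewrite mulrA -natrM mulnb andbA.
by case: (ja u == j); case: (ia u != i); case: (cnt i j u == n.-1).
Qed.


Variable s : I -> J -> nat -> R.

Definition X i j t := \sum_(1 <= u < t.+1) ((ja u == j)%:R * s i j (cnt i j u.-1).+1).
Definition Nj j t : nat := \sum_(1 <= u < t.+1) (ja u == j).
Local Notation W := (weight_upto ia ja).

Lemma sum_pred1J (F : J -> R) j0 : \sum_j ((j0 == j)%:R * F j) = F j0.
Proof.
rewrite (bigD1 j0) //= eqxx mul1r big1 ?addr0 // => j' /negbTE.
by rewrite eq_sym => ->; rewrite mul0r.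
Qed.

Lemma bandit_sumE k t : \sum_(1 <= u < t.+1) bandit_reward ia ja s k u = \sum_j X k j t.
Proof.
rewrite /X exchange_big /=; apply: eq_bigr => u _.
by rewrite sum_pred1J.
Qed.

Lemma X_split i j t : X i j t =
  \sum_(1 <= u < t.+1) (((ia u == i) && (ja u == j))%:R * s i j (cnt i j u))
  + \sum_(1 <= u < t.+1) (((ja u == j) && (ia u != i))%:R * s i j (cnt i j u).+1).
Proof.
rewrite /X -big_split /=; apply: eq_big_nat => u /andP [u1 _].
case: u u1 => // u _ /=.
rewrite cntS.
by case: (ia u.+1 == i); case: (ja u.+1 == j); rewrite /= ?addn0 ?addn1 ?mul0r ?mul1r ?addr0 ?add0r.
Qed.

Lemma X_W i j t : X i j t =
  \sum_(1 <= n < (cnt i j t).+2) ((W i j t n)%:R * s i j n) - s i j (cnt i j t).+1.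
Proof.
rewrite X_split reindex_b reindex_o.
under [in RHS]eq_bigr => n _ do rewrite weightE natrD mulrDl mul1r.
rewrite big_split /= [\sum_(1 <= i0 < (cnt i j t).+2) s i j i0]big_nat_recr //=; lra.
Qed.

Lemma W_total i j t :
  \sum_(1 <= n < (cnt i j t).+2) (W i j t n)%:R = (Nj j t).+1%:R :> R.
Proof.
have H1 := reindex_o i j (fun _ => 1) t.
have H2 := reindex_b i j (fun _ => 1) t.
under eq_bigr => n _ do rewrite weightE natrD.
rewrite big_split /=.
under [X in _ + X = _]eq_bigr => n _ do rewrite -[(G i j t n)%:R]mulr1.
rewrite -H1 {H1}.
rewrite sumr_const_nat.
have -> : ((cnt i j t).+2 - 1 = (cnt i j t).+1)%N by lia.
have E : Nj j t = (cnt i j t + \sum_(1 <= u < t.+1) ((ja u == j) && (ia u != i)))%N.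
  clear H2; elim: t => [|t IH]; first by rewrite /Nj cnt0 !big_geq.
  rewrite /Nj big_nat_recr //= -/(Nj j t) IH cntS [in RHS]big_nat_recr //=.
  by case: (ja t.+1 == j); case: (ia t.+1 == i); rewrite /=; lia.
rewrite E -addSn natrD natr_sum; congr (_ + _); apply: eq_bigr => u _.
by rewrite mulr1.
Qed.


Definition Num i j t n := \sum_(1 <= m < n.+1) ((W i j t m)%:R * s i j m).
Definition Den i j t n := \sum_(1 <= m < n.+1) ((W i j t m)%:R : R).

Lemma stilde_uptoE i j t n : stilde_upto ia ja s i j t n = Num i j t n / Den i j t n.
Proof. by []. Qed.

Lemma Den_ge i j t n : n%:R <= Den i j t n.
Proof.
elim: n => [|n IH]; first by rewrite /Den big_geq.
rewrite /Den big_nat_recr //= -/(Den i j t n) -natr1; apply: lerD => //.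
by rewrite weightE ler1n; lia.
Qed.

Lemma W_fix i j t t' m : (1 <= m)%N -> (m <= cnt i j t)%N -> (t <= t')%N ->
  W i j t' m = W i j t m.
Proof. by move=> m1 mc tt; rewrite !weightE (G_fix i j t t' m m1 mc tt). Qed.

Lemma Num_fix i j t t' n : (n <= cnt i j t)%N -> (t <= t')%N -> Num i j t' n = Num i j t n.
Proof.
move=> nc tt; apply: eq_big_nat => m /andP [m1 mn].
by rewrite (W_fix i j t t' m) //; lia.
Qed.

Lemma Den_fix i j t t' n : (n <= cnt i j t)%N -> (t <= t')%N -> Den i j t' n = Den i j t n.
Proof.
move=> nc tt; apply: eq_big_nat => m /andP [m1 mn].
by rewrite (W_fix i j t t' m) //; lia.
Qed.

Lemma stilde_fix i j t n : (n <= cnt i j t)%N ->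
  stilde ia ja s i j n = stilde_upto ia ja s i j t n.
Proof.
move=> nc; apply: norm_lim_near_cst; exists t => // T /= tT.
by rewrite !stilde_uptoE (Num_fix i j t T n nc tT) (Den_fix i j t T n nc tT).
Qed.


Lemma NumS i j t n : Num i j t n.+1 = Num i j t n + (W i j t n.+1)%:R * s i j n.+1.
Proof. by rewrite /Num big_nat_recr. Qed.
Lemma DenS i j t n : Den i j t n.+1 = Den i j t n + (W i j t n.+1)%:R.
Proof. by rewrite /Den big_nat_recr. Qed.

Lemma avg_ge i j t n L : (1 <= n)%N -> L <= stilde_upto ia ja s i j t n ->
  L * Den i j t n <= Num i j t n.
Proof.
move=> n1; rewrite stilde_uptoE ler_pdivlMr //.
apply: lt_le_trans (Den_ge i j t n); rewrite ltr0n; lia.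
Qed.

Lemma caseU i j L n0 : (1 <= n0)%N ->
  (forall n, (n0 <= n)%N -> L <= stilde ia ja s i j n) ->
  (forall M, exists t, (M <= cnt i j t)%N) ->
  forall t, (n0 <= cnt i j t)%N -> L * (Nj j t).+1%:R <= Num i j t (cnt i j t).+1.
Proof.
move=> n01 HL unb t Kn0.
set K := cnt i j t.
have h1 : L * Den i j t K <= Num i j t K.
  apply: avg_ge; first by rewrite /K; lia.
  by rewrite -stilde_fix // HL.
have [t'' Ht''] := unb K.+1.
set t' := maxn t t''.
have tt' : (t <= t')%N by rewrite /t' leq_maxl.
have ct' : (K.+1 <= cnt i j t')%N.
  by apply: leq_trans Ht'' (cnt_mono _ _ _ _ _); rewrite /t' leq_maxr.
have h2 : L * Den i j t' K.+1 <= Num i j t' K.+1.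
  apply: avg_ge => //. by rewrite -stilde_fix // HL //; lia.
rewrite NumS DenS (Num_fix i j t t' K) // (Den_fix i j t t' K) // in h2.
rewrite -(W_total i j t) -/K -/(Den i j t K.+1) DenS NumS.
have hw : ((W i j t K.+1)%:R : R) <= (W i j t' K.+1)%:R.
  by rewrite ler_nat !weightE leq_add2l G_mono.
have hw0 : (0 : R) <= (W i j t K.+1)%:R by [].
case: (lerP L (s i j K.+1)) => ha; nra.
Qed.


Lemma evconst (f : nat -> nat) : (forall t t', (t <= t')%N -> (f t <= f t')%N) ->
  (exists M, forall t, (f t <= M)%N) -> exists t1, forall t, (t1 <= t)%N -> f t = f t1.
Proof.
move=> mono [M HM].
suff : forall k t0, (forall t, (f t <= f t0 + k)%N) -> exists t1, forall t, (t1 <= t)%N -> f t = f t1.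
  by move=> H; apply: (H M 0%N) => t; apply: leq_trans (HM t) _; apply: leq_addl.
elim => [|k IH] t0 Hk.
  by exists t0 => t tt; have := Hk t; have := mono _ _ tt; lia.
have [H|H] := pselect (forall t, (t0 <= t)%N -> f t = f t0); first by exists t0.
have [t' Ht'] : exists t', (t0 <= t')%N /\ f t' <> f t0.
  apply: contrapT => hn; apply: H => t tt; apply: contrapT => ne; apply: hn; by exists t.
case: Ht' => t0t' ne; apply: (IH t') => t.
have := Hk t; have := mono _ _ t0t'; lia.
Qed.

Lemma Nj_mono j t t' : (t <= t')%N -> (Nj j t <= Nj j t')%N.
Proof.
move=> /subnKC <-; elim: (t' - t)%N => [|k IH]; first by rewrite addn0.
rewrite addnS /Nj [X in (_ <= X)%N]big_nat_recr //=; exact: leq_trans IH (leq_addr _ _).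
Qed.

Lemma sum_ind1 (h : nat -> R) n k : (1 <= k <= n)%N ->
  \sum_(1 <= m < n.+1) ((m == k)%:R * h m) = h k.
Proof.
elim: n => [|n IH] /andP [k1 kn]; first lia.
rewrite big_nat_recr //=.
have [Ek|ne] := eqVneq k n.+1.
  subst k.
  rewrite mul1r big1_seq ?add0r // => m; rewrite mem_index_iota => /andP [_ mn].
  by case: eqP => [?|_]; [lia | rewrite mul0r].
rewrite mul0r addr0 IH //; apply/andP; split => //; lia.
Qed.

Lemma W_bfix i j t1 T m : (forall t, (t1 <= t)%N -> cnt i j t = cnt i j t1) -> (t1 <= T)%N ->
  (1 <= m)%N -> m != (cnt i j t1).+1 -> W i j T m = W i j t1 m.
Proof.
move=> Hc tT m1 mK.
case: (leqP m (cnt i j t1)) => mle; first exact: W_fix.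
rewrite !weightE !G_zero //; last by rewrite Hc //; lia.
by move: mK mle; case: eqP => //; lia.
Qed.

Lemma NumDen_b i j t1 T n : (forall t, (t1 <= t)%N -> cnt i j t = cnt i j t1) -> (t1 <= T)%N ->
  ((cnt i j t1).+1 <= n)%N ->
  Num i j T n = Num i j t1 n + ((W i j T (cnt i j t1).+1)%:R - (W i j t1 (cnt i j t1).+1)%:R) * s i j (cnt i j t1).+1
  /\ Den i j T n = Den i j t1 n + ((W i j T (cnt i j t1).+1)%:R - (W i j t1 (cnt i j t1).+1)%:R).
Proof.
move=> Hc tT Kn; set K := cnt i j t1.
have E m : (1 <= m)%N -> ((W i j T m)%:R : R) = (W i j t1 m)%:R +
   (m == K.+1)%:R * ((W i j T K.+1)%:R - (W i j t1 K.+1)%:R).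
  move=> m1; case: (m =P K.+1) => [->|ne]; first by rewrite mul1r; lra.
  rewrite (W_bfix i j t1 T m Hc tT m1); last by apply/eqP.
  by rewrite mul0r addr0.
split.
  rewrite /Num -[X in _ + X](sum_ind1 (fun m => ((W i j T m)%:R - (W i j t1 m)%:R) * s i j m) n K.+1); last by apply/andP; split.
  rewrite -big_split /=; apply: eq_big_nat => m /andP [m1 _].
  by rewrite (E m m1); case: (m == K.+1); rewrite ?mul1r ?mul0r; lra.
rewrite /Den -[X in _ + X](sum_ind1 (fun m => ((W i j T m)%:R - (W i j t1 m)%:R)) n K.+1); last by apply/andP; split.
rewrite -big_split /=; apply: eq_big_nat => m /andP [m1 _].
by rewrite (E m m1); case: (m == K.+1); rewrite ?mul1r ?mul0r; lra.
Qed.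


Lemma caseB i j L n0 t1 :
  (forall n, (n0 <= n)%N -> L <= stilde ia ja s i j n) ->
  (forall t, (t1 <= t)%N -> cnt i j t = cnt i j t1) ->
  (forall M, exists t, (M <= Nj j t)%N) ->
  forall t, (t1 <= t)%N ->
  Num i j t1 (cnt i j t1).+1 - L * Den i j t1 (cnt i j t1).+1 + L * (Nj j t).+1%:R
  <= Num i j t (cnt i j t).+1.
Proof.
move=> HL Hc unb.
set K := cnt i j t1.
have Delta T : (t1 <= T)%N ->
    (W i j T K.+1)%:R - (W i j t1 K.+1)%:R = (Nj j T)%:R - (Nj j t1)%:R :> R.
  move=> t1T; have [_ hD] := NumDen_b i j t1 T K.+1 Hc t1T (leqnn _).
  have h1 := W_total i j T; have h2 := W_total i j t1.
  rewrite (Hc T t1T) -/K -/(Den i j T K.+1) in h1.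
  rewrite -/K -/(Den i j t1 K.+1) in h2.
  rewrite -!natr1 in h1 h2; lra.
have xL : L <= s i j K.+1.
  set n := maxn n0 K.+1.
  have Kn : (K.+1 <= n)%N by rewrite leq_maxr.
  have := HL n (leq_maxl _ _).
  suff -> : stilde ia ja s i j n = s i j K.+1 by [].
  apply: (cvg_lim (@Rhausdorff R)); apply/cvgrPdist_le => e e0.
  set N := Num i j t1 n; set D := Den i j t1 n; set x := s i j K.+1.
  have Dpos : 0 < D by apply: lt_le_trans (Den_ge i j t1 n); rewrite ltr0n; lia.
  have [t2 Ht2] := unb (Nj j t1 + (Num.Def.trunc (`|x * D - N| / e)%R).+1)%N.
  exists (maxn t1 t2) => // T /= HT.
  have t1T : (t1 <= T)%N by apply: leq_trans HT; rewrite leq_maxl.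
  have t2T : (t2 <= T)%N by apply: leq_trans HT; rewrite leq_maxr.
  have [hN hD] := NumDen_b i j t1 T n Hc t1T Kn.
  rewrite stilde_uptoE hN hD (Delta T t1T) -/N -/D -/x.
  have NjT := Nj_mono j t2 T t2T.
  have hT : (Num.Def.trunc (`|x * D - N| / e)).+1%:R + (Nj j t1)%:R <= (Nj j T)%:R :> R.
    by rewrite -natrD ler_nat; lia.
  have htr := truncnS_gt (`|x * D - N| / e).
  set d := (Nj j T)%:R - (Nj j t1)%:R.
  have dge : `|x * D - N| / e < d by rewrite /d; lra.
  have d0 : 0 <= d by apply: le_trans (ltW dge); apply: divr_ge0 => //; exact: ltW.
  have Dd : 0 < D + d by lra.
  rewrite (_ : x - (N + d * x) / (D + d) = (x * D - N) / (D + d)); last first.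
    by field; rewrite gt_eqF.
  rewrite normrM normrV ?unitfE ?gt_eqF // (gtr0_norm Dd) ler_pdivrMr //.
  rewrite ltr_pdivrMr // in dge.
  nra.
move=> t t1T.
have [hN _] := NumDen_b i j t1 t K.+1 Hc t1T (leqnn _).
rewrite (Hc t t1T) -/K hN (Delta t t1T).
have h2 := W_total i j t1; rewrite -/K -/(Den i j t1 K.+1) in h2.
rewrite h2.
have := Nj_mono j t1 t t1T; rewrite -(ler_nat R) => hm.
rewrite -!natr1; nra.
Qed.


Lemma Nj_le j t : (Nj j t <= t)%N.
Proof.
elim: t => [|t IH]; first by rewrite /Nj big_geq.
rewrite /Nj big_nat_recr //= -/(Nj j t); case: (ja t.+1 == j) => /=; lia.
Qed.

Lemma X_ge0 i j t : (forall n, 0 <= s i j n) -> 0 <= X i j t.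
Proof. by move=> h; rewrite /X; apply: sumr_ge0 => u _; apply: mulr_ge0. Qed.

Lemma small_bound j (L : R) t t0 : (t < t0)%N -> (Nj j t)%:R * L <= t0%:R * `|L|.
Proof.
move=> tt0; have h1 : (Nj j t)%:R <= t0%:R :> R.
  by rewrite ler_nat; apply: leq_trans (Nj_le j t) _; lia.
have h2 := ler_norm L; have h3 : (0 : R) <= (Nj j t)%:R by [].
have h4 : (0 : R) <= `|L| by [].
nra.
Qed.

Lemma claimB i j L : (forall n, 0 <= s i j n <= 1) ->
  (exists n0, forall n, (n0 <= n)%N -> L <= stilde ia ja s i j n) ->
  exists C, 0 <= C /\ forall t, (Nj j t)%:R * L - C <= X i j t.
Proof.
move=> s01 [n0' HL'].
set n0 := maxn n0' 1.
have HL n : (n0 <= n)%N -> L <= stilde ia ja s i j n.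
  by move=> h; apply: HL'; apply: leq_trans h; rewrite leq_maxl.
have n01 : (1 <= n0)%N by rewrite leq_maxr.
have s0 n : 0 <= s i j n by case/andP: (s01 n).
have s1 n : s i j n <= 1 by case/andP: (s01 n).
have XE t : X i j t = Num i j t (cnt i j t).+1 - s i j (cnt i j t).+1 by rewrite X_W.
have hL := ler_norm L; have hL0 : 0 <= `|L| by [].
have hL' := ler_norm (- L); rewrite normrN in hL'.
have [unb|nunb] := pselect (forall M, exists t, (M <= cnt i j t)%N).
  have [t0 Ht0] := unb n0.
  exists (`|L| + 1 + t0%:R * `|L|); split; first by apply: addr_ge0 => //; apply: mulr_ge0.
  move=> t; case: (leqP t0 t) => tt0.
    have := caseU i j L n0 n01 HL unb t (leq_trans Ht0 (cnt_mono i j t0 t tt0)).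
    move=> h; rewrite XE; rewrite -natr1 mulrDr mulr1 mulrC in h.
    have := s1 (cnt i j t).+1; have : (0:R) <= t0%:R * `|L| by apply: mulr_ge0.
    nra.
  have := small_bound j L t t0 tt0; have := X_ge0 i j t s0; lra.
have [M HM] : exists M, forall t, (cnt i j t <= M)%N.
  apply: contrapT => h; apply: nunb => M; apply: contrapT => h'; apply: h; exists M => t.
  case: (leqP (cnt i j t) M) => // ltM; exfalso; apply: h'; exists t; exact: ltnW.
have [t1 Ht1] := evconst _ (cnt_mono i j) (ex_intro _ M HM).
have [unbN|nunbN] := pselect (forall M, exists t, (M <= Nj j t)%N).
  set S1 := Num i j t1 (cnt i j t1).+1 - L * Den i j t1 (cnt i j t1).+1.
  exists (`|S1| + `|L| + 1 + t1%:R * `|L|); split.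
    by apply: addr_ge0 => //; apply: mulr_ge0.
  have hS := ler_norm (- S1); rewrite normrN in hS.
  move=> t; case: (leqP t1 t) => tt1.
    have := caseB i j L n0 t1 HL Ht1 unbN t tt1; rewrite -/S1 => h; rewrite XE; rewrite -natr1 mulrDr mulr1 mulrC in h.
    have := s1 (cnt i j t).+1; have : (0:R) <= t1%:R * `|L| by apply: mulr_ge0.
    nra.
  have := small_bound j L t t1 tt1; have := X_ge0 i j t s0.
  have : (0:R) <= `|S1| by []. lra.
have [B HB] : exists B, forall t, (Nj j t <= B)%N.
  apply: contrapT => h; apply: nunbN => B; apply: contrapT => h'; apply: h; exists B => t.
  case: (leqP (Nj j t) B) => // ltB; exfalso; apply: h'; exists t; exact: ltnW.
exists (B.+1%:R * `|L|); split; first by apply: mulr_ge0.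
move=> t; have := X_ge0 i j t s0.
have hb : (Nj j t)%:R <= B.+1%:R :> R by rewrite ler_nat; apply: leq_trans (HB t) _.
have : (0 : R) <= (Nj j t)%:R by [].
nra.
Qed.


Lemma sum_pred1 (T : finType) (F : T -> R) x0 : \sum_x ((x0 == x)%:R * F x) = F x0.
Proof.
rewrite (bigD1 x0) //= eqxx mul1r big1 ?addr0 // => x /negbTE.
by rewrite eq_sym => ->; rewrite mul0r.
Qed.

Lemma fmax_ub (F : I -> R) i : F i <= fmax F.
Proof.
apply: ub_le_sup; last by exists i.
exists (\sum_k `|F k|) => _ [k _ <-].
rewrite (bigD1 k) //=; apply: le_trans (ler_norm _) _.
by rewrite lerDl; apply: sumr_ge0.
Qed.

Lemma fmax_le (F : I -> R) b (i0 : I) : (forall i, F i <= b) -> fmax F <= b.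
Proof. by move=> h; apply: ge_sup; [exists (F i0), i0 | move=> _ [k _ <-]]. Qed.

Lemma regroup (g : I -> J -> nat -> R) t :
  \sum_i \sum_j \sum_(1 <= n < (cnt i j t).+1) g i j n =
  \sum_(1 <= u < t.+1) g (ia u) (ja u) (cnt (ia u) (ja u) u).
Proof.
under eq_bigr => i _ do under eq_bigr => j _ do rewrite -reindex_b.
under eq_bigr => i _ do rewrite exchange_big.
rewrite exchange_big /=; apply: eq_bigr => u _.
rewrite (eq_bigr (fun i => (ia u == i)%:R *
   \sum_j ((ja u == j)%:R * g i j (cnt i j u)))); last first.
  move=> i _; rewrite mulr_sumr; apply: eq_bigr => j _.
  by rewrite mulrA -natrM mulnb [ia u == i]eq_sym [ja u == j]eq_sym.
by rewrite sum_pred1 sum_pred1.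
Qed.

Lemma br_diag t : (1 <= t)%N ->
  bandit_reward ia ja s (ia t) t = s (ia t) (ja t) (cnt (ia t) (ja t) t).
Proof.
case: t => // t _; rewrite /bandit_reward /= cntS !eqxx /=.
by rewrite addn1.
Qed.

Lemma Nj_sum (F : J -> R) t : \sum_j ((Nj j t)%:R * F j) = \sum_(1 <= u < t.+1) F (ja u).
Proof.
under eq_bigr => j _ do rewrite /Nj natr_sum mulr_suml.
rewrite exchange_big /=; apply: eq_bigr => u _.
by rewrite sum_pred1.
Qed.


Lemma sum_bound (f : nat -> R) v a N : 0 <= a -> (forall n, 0 <= f n <= 1) ->
  (forall n, (N <= n)%N -> `|n%:R^-1 * \sum_(1 <= m < n.+1) f m - v| <= a) ->
  forall K, \sum_(1 <= n < K.+1) (f n - v) <= K%:R * a + N%:R * (1 + `|v|).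
Proof.
move=> a0 f01 H K.
have hv := ler_norm (- v); rewrite normrN in hv.
have hv0 : 0 <= `|v| by [].
case: (leqP N K) => NK; last first.
  have : \sum_(1 <= n < K.+1) (f n - v) <= K%:R * (1 + `|v|).
    have -> : K%:R * (1 + `|v|) = \sum_(1 <= n < K.+1) (1 + `|v|).
      by rewrite sumr_const_nat subn1 /= mulr_natl.
    apply: ler_sum => n _; have := f01 n; case/andP => _ h; lra.
  have hK : (K%:R : R) <= N%:R by rewrite ler_nat ltnW.
  have : (0 : R) <= K%:R * a by apply: mulr_ge0.
  nra.
case: K NK => [|K] NK.
  rewrite big_geq // mul0r add0r; apply: mulr_ge0 => //; lra.
have h := H _ NK.
set S := \sum_(1 <= i < K.+2) f i in h.
rewrite sumrB sumr_const_nat subn1 /= -/S -[v *+ _]mulr_natl.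
have hK : (0 : R) < K.+1%:R by rewrite ltr0n.
have E : S = K.+1%:R * (K.+1%:R^-1 * S - v) + K.+1%:R * v.
  by field; rewrite gt_eqF.
rewrite E; move/ler_normlW: h => h.
have : K.+1%:R * (K.+1%:R^-1 * S - v) <= K.+1%:R * a.
  exact: (ler_wpM2l (ltW hK) h).
have : (0 : R) <= N%:R * (1 + `|v|) by apply: mulr_ge0 => //; lra.
move=> h1 h2; rewrite addrK; apply: le_trans h2 _; rewrite lerDl.
exact: h1.
Qed.

Lemma main_det_sec (v : I -> J -> R) eps c : 0 <= eps -> 0 <= c ->
  (forall i j n, 0 <= s i j n <= 1) ->
  limsup_le (bandit_regret ia ja s) eps ->
  (forall i j, limsup_le (fun n => `|sbar s i j n - v i j|) (c * eps)) ->
  (forall i j, limsup_le (fun n => `|stilde ia ja s i j n - sbar s i j n|) eps) ->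
  limsup_le (matrix_regret ia ja v) (2 * (c + 1) * eps).
Proof.
move=> e0 c0 s01 Hr Hsb Hup.
apply: lsup_intro => e epos.
set e' := e / 4.
have e'0 : 0 < e' by rewrite /e' divr_gt0.
have e'20 : 0 < e' / 2 by rewrite divr_gt0.
have ce0 : 0 <= c * eps by apply: mulr_ge0.
have [N0 HN0] := lsup_elim Hr _ e'0.
have hA : forall ij : (I * J)%type, exists C, 0 <= C /\ forall K,
    \sum_(1 <= n < K.+1) (s ij.1 ij.2 n - v ij.1 ij.2) <= K%:R * (c * eps + e') + C.
  move=> [i j] /=; have [N HN] := lsup_elim (Hsb i j) _ e'0.
  exists (N%:R * (1 + `|v i j|)); split.
    by apply: mulr_ge0 => //; apply: addr_ge0.
  apply: (@sum_bound (s i j) (v i j) (c * eps + e') N).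
  - by apply: addr_ge0 => //; exact: ltW.
  - exact: s01 i j.
  - exact: HN.
have [CAf HCA] := choice hA.
have hB : forall ij : (I * J)%type, exists C, 0 <= C /\ forall t,
    (Nj ij.2 t)%:R * (v ij.1 ij.2 - (c + 1) * eps - e') - C <= X ij.1 ij.2 t.
  move=> [i j] /=; apply: claimB => //.
  have [N1 HN1] := lsup_elim (Hup i j) _ e'20.
  have [N2 HN2] := lsup_elim (Hsb i j) _ e'20.
  exists (maxn N1 N2) => n Hn.
  have := HN1 n (leq_trans (leq_maxl _ _) Hn).
  have := HN2 n (leq_trans (leq_maxr _ _) Hn).
  move=> /ler_normlP [h1 h2] /ler_normlP [h3 h4].
  rewrite mulrDl mul1r; lra.
have [CBf HCB] := choice hB.
set CA := \sum_i \sum_j CAf (i, j).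
set CB := \sum_i \sum_j CBf (i, j).
have CAf0 ij : 0 <= CAf ij by case: (HCA ij).
have CBf0 ij : 0 <= CBf ij by case: (HCB ij).
have CA0 : 0 <= CA by apply: sumr_ge0 => i _; apply: sumr_ge0 => j _; exact: CAf0.
have CB0 : 0 <= CB by apply: sumr_ge0 => i _; apply: sumr_ge0 => j _; exact: CBf0.
have CBi i0 : \sum_j CBf (i0, j) <= CB.
  rewrite /CB (bigD1 i0) //= lerDl; apply: sumr_ge0 => i _; apply: sumr_ge0 => j _; exact: CBf0.
set Nt := maxn (maxn N0 1) (Num.Def.trunc ((CA + CB) / e')).+1.
exists Nt => t Ht.
have tN0 : (N0 <= t)%N by apply: leq_trans Ht; rewrite /Nt; lia.
have t1 : (1 <= t)%N by apply: leq_trans Ht; rewrite /Nt; lia.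
have tC : ((Num.Def.trunc ((CA + CB) / e')).+1 <= t)%N by apply: leq_trans Ht; rewrite /Nt leq_maxr.
set T : R := t%:R.
have T0 : 0 < T by rewrite /T ltr0n.
have hCT : CA + CB <= T * e'.
  have := truncnS_gt ((CA + CB) / e').
  have : ((Num.Def.trunc ((CA + CB) / e')).+1%:R : R) <= T by rewrite /T ler_nat.
  move=> h1 h2; have h3 : (CA + CB) / e' < T by lra.
  by rewrite ltr_pdivrMr // in h3; exact: ltW.
have hr := HN0 t tN0.
have H1 i0 : \sum_(1 <= u < t.+1) v i0 (ja u) <=
    \sum_(1 <= u < t.+1) bandit_reward ia ja s i0 u + T * ((c + 1) * eps + e') + CB.
  rewrite bandit_sumE.
  have h : \sum_j ((Nj j t)%:R * (v i0 j - (c + 1) * eps - e') - CBf (i0, j)) <= \sum_j X i0 j t.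
    by apply: ler_sum => j _; case: (HCB (i0, j)) => _; apply.
  rewrite sumrB Nj_sum in h.
  rewrite (eq_bigr (fun u => v i0 (ja u) - ((c + 1) * eps + e'))) in h; last by move=> u _; lra.
  rewrite sumrB sumr_const_nat subn1 /= -mulr_natl -/T in h.
  have := CBi i0; lra.
have H2 : \sum_(1 <= u < t.+1) bandit_reward ia ja s (ia u) u
    - \sum_(1 <= u < t.+1) v (ia u) (ja u) <= T * (c * eps + e') + CA.
  rewrite -sumrB.
  rewrite (eq_big_nat _ _ (F2 := fun u => s (ia u) (ja u) (cnt (ia u) (ja u) u) - v (ia u) (ja u))); last first.
    by move=> u /andP [u1 _]; rewrite br_diag.
  rewrite -(regroup (fun i j n => s i j n - v i j)).
  have hc : T * (c * eps + e') = \sum_i \sum_j \sum_(1 <= n < (cnt i j t).+1) (c * eps + e').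
    by rewrite (regroup (fun _ _ _ => c * eps + e')) sumr_const_nat subn1 /= -mulr_natl.
  rewrite hc /CA -big_split /=; apply: ler_sum => i _.
  rewrite -big_split /=; apply: ler_sum => j _.
  rewrite sumr_const_nat subn1 /= -mulr_natl.
  by case: (HCA (i, j)) => _; apply.
set Fx := fun k => \sum_(1 <= u < t.+1) bandit_reward ia ja s k u.
set Fv := fun i0 => \sum_(1 <= u < t.+1) v i0 (ja u).
have H3 : fmax Fv <= fmax Fx + T * ((c + 1) * eps + e') + CB.
  apply: (fmax_le _ _ (ia 0%N)) => i0; apply: le_trans (H1 i0) _.
  by rewrite /Fx lerD2r lerD2r; apply: fmax_ub.
have H4 : fmax Fx - \sum_(1 <= u < t.+1) bandit_reward ia ja s (ia u) u <= T * (eps + e').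
  move: hr; rewrite /bandit_regret -/T -/Fx mulrC ler_pdivrMr // => h.
  by rewrite mulrC.
rewrite /matrix_regret -/T -/Fv mulrC ler_pdivrMr //.
have -> : e = 4 * e' by rewrite /e'; field.
have : T * (c * eps) >= 0 by apply: mulr_ge0 => //; exact: ltW.
have : T * eps >= 0 by apply: mulr_ge0 => //; exact: ltW.
nra.
Qed.

End Det.

Lemma main_det (R : realType) (I J : finType) (ia : nat -> I) (ja : nat -> J)
  (s : I -> J -> nat -> R) (v : I -> J -> R) (eps c : R) :
  0 <= eps -> 0 <= c -> (forall i j n, 0 <= s i j n <= 1) ->
  limsup_le (bandit_regret ia ja s) eps ->
  (forall i j, limsup_le (fun n => `|sbar s i j n - v i j|) (c * eps)) ->
  (forall i j, limsup_le (fun n => `|stilde ia ja s i j n - sbar s i j n|) eps) ->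
  limsup_le (matrix_regret ia ja v) (2 * (c + 1) * eps).
Proof. exact: main_det_sec. Qed.

Theorem proposition2 (R : realType) (d : measure_display)
  (Omega : measurableType d) (P : probability Omega R)
  (I J : finType)
  (ia : Omega -> nat -> I) (ja : Omega -> nat -> J)
  (s : Omega -> I -> J -> nat -> R)
  (v : I -> J -> R) (eps c : R) :
  0 <= eps -> 0 <= c ->
  (* returned values are terminal utilities, hence in [0,1] *)
  (forall w i j n, 0 <= s w i j n <= 1) ->
  (* A is eps-Hannan consistent (on its run at h against the adversary) *)
  {ae P, forall w, limsup_le (bandit_regret (ia w) (ja w) (s w)) eps} ->
  (* a.s. limsup_n |sbar_ij(n) - v_ij| <= c eps for each i, j *)
  (forall i j, {ae P, forall w,
     limsup_le (fun n => `|sbar (s w) i j n - v i j|) (c * eps)}) ->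
  (* A is eps-UPO (at h) *)
  (forall i j, {ae P, forall w,
     limsup_le (fun n => `|stilde (ia w) (ja w) (s w) i j n
                           - sbar (s w) i j n|) eps}) ->
  {ae P, forall w,
     limsup_le (matrix_regret (ia w) (ja w) v) (2 * (c + 1) * eps)}.
Proof.
move=> e0 c0 s01 H1 H2 H3.
have F := ae_filter_ringOfSetsType P.
have H2' := @filter_forall _ (I * J)%type _ _ F (fun ij => H2 ij.1 ij.2).
have H3' := @filter_forall _ (I * J)%type _ _ F (fun ij => H3 ij.1 ij.2).
have H23 := @filterS2 _ _ F _ _ _ (fun w a b => conj a b) H2' H3'.
apply: (@filterS2 _ _ F _ _ _ _ H1 H23) => w h1 [h2 h3].
apply: (@main_det R I J (ia w) (ja w) (s w) v eps c e0 c0 (s01 w) h1).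
- by move=> i j; exact: (h2 (i, j)).
- by move=> i j; exact: (h3 (i, j)).
Qed.
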